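(* Let $V$ be a finite-dimensional real vector space with a linear action of $\mathbb H$, $\Lambda\subset V$ a lattice of maximal rank, and $W\subset V$ a real subspace. For $L\in\mathbb H$ with $L^2=-1$ let $W_{\mathbb Q,L}$ be the minimal rational $L$-invariant subspace of $V$ containing $W$, and $W_{\mathbb Q,\mathbb H}$ the minimal rational $\mathbb H$-invariant subspace of $V$ containing $W$. Then $W_{\mathbb Q,L}=W_{\mathbb Q,\mathbb H}$ for all such $L$ except for at most countably many.
   Context: A real subspace $U\subset V$ is rational if $\Lambda\cap U$ is a lattice of maximal rank in $U$. *)

(* Defs.v *)
From HB Require Import structures.
From mathcomp Require Import all_boot all_order all_algebra.
From mathcomp Require Import boolp classical_sets cardinality reals.
Set Implicit Arguments. Unset Strict Implicit. Unset Printing Implicit Defensive.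
Import Order.TTheory GRing.Theory Num.Theory.
Local Open Scope ring_scope.
Local Open Scope classical_set_scope.

Record quat (R : Type) := Quat { qr : R; qi : R; qj : R; qk : R }.

Section Quat.
Variable R : realType.

Definition qadd (p q : quat R) : quat R :=
  Quat (qr p + qr q) (qi p + qi q) (qj p + qj q) (qk p + qk q).
Definition qscale (a : R) (p : quat R) : quat R :=
  Quat (a * qr p) (a * qi p) (a * qj p) (a * qk p).
Definition qone : quat R := Quat 1 0 0 0.
Definition qmul (p q : quat R) : quat R :=
  Quat (qr p * qr q - qi p * qi q - qj p * qj q - qk p * qk q)
       (qr p * qi q + qi p * qr q + qj p * qk q - qk p * qj q)
       (qr p * qj q - qi p * qk q + qj p * qr q + qk p * qi q)
       (qr p * qk q + qi p * qj q - qj p * qi q + qk p * qr q).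
Definition qopp (p : quat R) : quat R := qscale (-1) p.

Variable n : nat.

(* A linear (left) action of H on V = R^n (row vectors): q . v := v *m rho q.
   R-linear, unital, and (p q) . v = p . (q . v). *)
Definition is_quat_action (rho : quat R -> 'M[R]_n) : Prop :=
  [/\ forall a p q, rho (qadd (qscale a p) q) = a *: rho p + rho q,
      rho qone = 1%:M
    & forall p q, rho (qmul p q) = rho q *m rho p].

Definition full_lattice_in (U : 'M[R]_n) (S : set 'rV[R]_n) : Prop :=
  exists (k : nat) (B : 'M[R]_(k, n)),
    [/\ row_free B, (B == U)%MS &
        S = [set v : 'rV[R]_n | exists z : 'rV[int]_k, v = map_mx (fun x : int => x%:~R) z *m B]].

Definition full_lattice (Lam : set 'rV[R]_n) : Prop :=
  full_lattice_in 1%:M Lam.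

Definition rational (Lam : set 'rV[R]_n) (U : 'M[R]_n) : Prop :=
  full_lattice_in U (Lam `&` [set v : 'rV[R]_n | (v <= U)%MS]).

Definition inv_L (rho : quat R -> 'M[R]_n) (L : quat R) (U : 'M[R]_n) : Prop :=
  (U *m rho L <= U)%MS.

Definition inv_H (rho : quat R -> 'M[R]_n) (U : 'M[R]_n) : Prop :=
  forall q, (U *m rho q <= U)%MS.

Definition minimal_rational (Lam : set 'rV[R]_n) (P : 'M[R]_n -> Prop)
    (m : nat) (W : 'M[R]_(m, n)) (U : 'M[R]_n) : Prop :=
  [/\ rational Lam U, P U, (W <= U)%MS &
      forall U', rational Lam U' -> P U' -> (W <= U')%MS -> (U <= U')%MS].

End Quat.

(* Main.v *)
Require Import Defs.
From HB Require Import structures.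
From mathcomp Require Import all_boot all_order all_algebra.
From mathcomp Require Import boolp classical_sets cardinality reals.
From mathcomp Require Import ring lra zify.
Import Order.TTheory GRing.Theory Num.Theory.
Local Open Scope ring_scope.
Local Open Scope classical_set_scope.
Set Implicit Arguments. Unset Strict Implicit. Unset Printing Implicit Defensive.

Section QuatPart.
Variables (R : realType) (n : nat) (rho : quat R -> 'M[R]_n).
Hypothesis hrho : is_quat_action rho.

Lemma quat_eq (p q : quat R) : qr p = qr q -> qi p = qi q -> qj p = qj q -> qk p = qk q -> p = q.
Proof. by case: p q => a b c d [a' b' c' d'] /= -> -> -> ->. Qed.

Let z0 : quat R := Quat 0 0 0 0.

Lemma rho0 : rho z0 = 0.
Proof.
case: hrho => lin _ _.
have e : qadd (qscale 1 z0) z0 = z0 by apply: quat_eq; rewrite /= mulr0 addr0.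
have h := lin 1 z0 z0; rewrite e scale1r in h.
by apply/(addrI (rho z0)); rewrite addr0 -h.
Qed.

Lemma rhoZ a p : rho (qscale a p) = a *: rho p.
Proof.
case: hrho => lin _ _.
have e : qadd (qscale a p) z0 = qscale a p by apply: quat_eq; rewrite /= addr0.
by rewrite -e lin rho0 addr0.
Qed.

Lemma rhoD p q : rho (qadd p q) = rho p + rho q.
Proof.
case: hrho => lin _ _.
have e : qadd (qscale 1 p) q = qadd p q by apply: quat_eq; rewrite /= !mul1r.
by rewrite -e lin scale1r.
Qed.

Section Stab.
Variables (m : nat) (U : 'M[R]_(m, n)).
Definition stab q := (U *m rho q <= U)%MS.

Lemma stab1 : stab (qone R).
Proof. by rewrite /stab; case: hrho => _ -> _; rewrite mulmx1. Qed.

Lemma stabM p q : stab p -> stab q -> stab (qmul p q).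
Proof.
case: hrho => _ _ hM; rewrite /stab hM => sp sq.
by rewrite mulmxA (submx_trans _ sp) // submxMr.
Qed.

Lemma stabD p q : stab p -> stab q -> stab (qadd p q).
Proof. by rewrite /stab rhoD mulmxDr => sp sq; rewrite addmx_sub. Qed.

Lemma stabZ a p : stab p -> stab (qscale a p).
Proof. by rewrite /stab rhoZ -scalemxAr => sp; rewrite scalemx_sub. Qed.
End Stab.

Lemma sq_m1 (L : quat R) : qmul L L = qopp (qone R) ->
  qr L = 0 /\ qi L ^+ 2 + qj L ^+ 2 + qk L ^+ 2 = 1.
Proof.
case: L => a b c d; rewrite /qmul /qopp /qscale /= => -[e1 e2 e3 e4].
have a0 : a = 0.
  apply/eqP/negP => /negP an0.
  have : b = 0 /\ c = 0 /\ d = 0.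
    have hb : a * b = 0 by lra.
    have hc : a * c = 0 by lra.
    have hd : a * d = 0 by lra.
    move: hb hc hd => /eqP + /eqP + /eqP.
    by rewrite !mulf_eq0 (negPf an0) /= => /eqP -> /eqP -> /eqP ->.
  case=> b0 [c0 d0]; subst; nra.
subst; split => //; nra.
Qed.


Lemma sumsq0 (x y z : R) : x ^+ 2 + y ^+ 2 + z ^+ 2 = 0 -> x = 0 /\ y = 0 /\ z = 0.
Proof.
move=> h.
have hx : x ^+ 2 = 0 by apply/eqP; rewrite eq_le sqr_ge0 andbT; nra.
have hy : y ^+ 2 = 0 by apply/eqP; rewrite eq_le sqr_ge0 andbT; nra.
have hz : z ^+ 2 = 0 by apply/eqP; rewrite eq_le sqr_ge0 andbT; nra.
by move: hx hy hz => /eqP + /eqP + /eqP; rewrite !sqrf_eq0 => /eqP -> /eqP -> /eqP ->.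
Qed.

Lemma two_units_stab (m : nat) (U : 'M[R]_(m, n)) (L1 L2 : quat R) :
  qmul L1 L1 = qopp (qone R) -> qmul L2 L2 = qopp (qone R) ->
  L2 <> L1 -> L2 <> qopp L1 -> stab U L1 -> stab U L2 -> forall q, stab U q.
Proof.
move=> /sq_m1 [r1 n1] /sq_m1 [r2 n2] ne1 ne2 s1 s2 q.
case: L1 r1 n1 ne1 ne2 s1 => r1 a1 a2 a3 /= -> n1.
case: L2 r2 n2 s2 => r2 b1 b2 b3 /= -> n2 s2 ne1 ne2 s1.
pose c1 := a2 * b3 - a3 * b2.
pose c2 := a3 * b1 - a1 * b3.
pose c3 := a1 * b2 - a2 * b1.
pose t := a1 * b1 + a2 * b2 + a3 * b3.
pose D := c1 ^+ 2 + c2 ^+ 2 + c3 ^+ 2.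
have D0 : D != 0.
  apply/eqP => hD.
  have [h1 [h2 h3]] := sumsq0 hD.
  have lag : (a1 ^+ 2 + a2 ^+ 2 + a3 ^+ 2) * (b1 ^+ 2 + b2 ^+ 2 + b3 ^+ 2) - t ^+ 2 = D.
    by rewrite /D /c1 /c2 /c3 /t; ring.
  rewrite n1 n2 hD mul1r in lag.
  have t2 : t ^+ 2 = 1 by lra.
  have hs : (a1 - t * b1) ^+ 2 + (a2 - t * b2) ^+ 2 + (a3 - t * b3) ^+ 2 = 0.
    have -> : (a1 - t * b1) ^+ 2 + (a2 - t * b2) ^+ 2 + (a3 - t * b3) ^+ 2 =
      (a1 ^+ 2 + a2 ^+ 2 + a3 ^+ 2) - 2 * t * t + t ^+ 2 * (b1 ^+ 2 + b2 ^+ 2 + b3 ^+ 2).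
      by rewrite /t; ring.
    by rewrite n1 n2; nra.
  have [e1 [e2 e3]] := sumsq0 hs.
  have : (t - 1) * (t + 1) = 0.
    have -> : (t - 1) * (t + 1) = t ^+ 2 - 1 by ring.
    by rewrite t2 subrr.
  move/eqP; rewrite mulf_eq0 => /orP [] /eqP ht.
    have ht' : t = 1 by lra.
    apply: ne1; rewrite ht' !mul1r in e1 e2 e3.
    by apply: quat_eq => /=; lra.
  have ht' : t = -1 by lra.
  apply: ne2; rewrite ht' !mulN1r !opprK in e1 e2 e3.
  by apply: quat_eq => /=; lra.
pose L1 := Quat 0 a1 a2 a3; pose L2 := Quat 0 b1 b2 b3.
pose C := qadd (qmul L1 L2) (qscale t (qone R)).
have sC : stab U C by apply: stabD; [apply: stabM | apply: stabZ; apply: stab1].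
case: q => x0 x1 x2 x3.
pose al := (x1 * (b2 * c3 - b3 * c2) + x2 * (b3 * c1 - b1 * c3) + x3 * (b1 * c2 - b2 * c1)) / D.
pose be := (x1 * (c2 * a3 - c3 * a2) + x2 * (c3 * a1 - c1 * a3) + x3 * (c1 * a2 - c2 * a1)) / D.
pose ga := (x1 * c1 + x2 * c2 + x3 * c3) / D.
have -> : Quat x0 x1 x2 x3 = qadd (qscale x0 (qone R))
   (qadd (qscale al L1) (qadd (qscale be L2) (qscale ga C))).
  apply: quat_eq; rewrite /= /al /be /ga /t; move: D0; rewrite /D /c1 /c2 /c3 => D0; field => //.
apply: stabD; first by apply: stabZ; apply: stab1.
apply: stabD; first exact: stabZ.
by apply: stabD; apply: stabZ.
Qed.

End QuatPart.
Section RatPart.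
Variables (R : realType) (n k0 : nat) (B0 : 'M[R]_(k0, n)).
Hypotheses (hfree : row_free B0) (hfull : (B0 == 1%:M)%MS).

Local Notation ZI M := (map_mx (fun x : int => x%:~R : R) M).

Definition Lam0 : set 'rV[R]_n :=
  [set v : 'rV[R]_n | exists z : 'rV[int]_k0, v = map_mx (fun x : int => x%:~R) z *m B0].

Definition RatSp (U : 'M[R]_n) := exists k (M : 'M[int]_(k, k0)), (U == ZI M *m B0)%MS.

Lemma rat_RatSp U : Defs.rational Lam0 U -> RatSp U.
Proof.
case=> k [B [Bf BU HS]].
have hrow : forall i : 'I_k, exists z : 'rV[int]_k0, row i B = ZI z *m B0.
  move=> i.
  have : (Lam0 `&` [set v | (v <= U)%MS]) (row i B).
    rewrite HS; exists (delta_mx 0 i).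
    by rewrite map_delta_mx -rowE.
  by case.
have [f hf] := choice hrow.
exists k, (\matrix_i f i).
suff -> : ZI (\matrix_i f i) *m B0 = B by apply/eqmxP/eqmx_sym/eqmxP.
apply/row_matrixP => i; rewrite row_mul -map_row rowK hf //.
Qed.


Lemma ZI_unit m (A : 'M[int]_m) : A \in unitmx -> ZI A \in unitmx.
Proof.
rewrite !unitmxE => hA.
rewrite (det_map_mx (GRing.RMorphism.clone _ _ (fun x : int => x%:~R : R) _)).
exact: rmorph_unit.
Qed.

Lemma ZI_free m (A : 'M[int]_m) : A \in unitmx -> row_free (ZI A).
Proof. by move=> /ZI_unit; rewrite row_free_unit. Qed.

Lemma RatSp_rat k (M : 'M[int]_(k, k0)) U : (U == ZI M *m B0)%MS -> Defs.rational Lam0 U.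
Proof.
move=> /eqmxP eUM.
have [L Lu [Rm Ru [d dsort dM]]] := int_Smith_normal_form M.
set D := \matrix_(i, j) _ in dM.
pose f := find (fun x : int => x == 0) d.
pose r := minn f (minn k k0).
have rk : (r <= k)%N by rewrite /r; lia.
have rk0 : (r <= k0)%N by rewrite /r; lia.
have f1 : forall i, (i < r)%N -> d`_i != 0.
  move=> i ir; have := @before_find _ 0 (fun x : int => x == 0) d i.
  by rewrite /= => ->; rewrite // /f; move: ir; rewrite /r; lia.
have f2 : forall i, (f <= i)%N -> d`_i = 0.
  move=> i fi; have [si|si] := leqP (size d) i; first by rewrite nth_default.
  have hf : (f < size d)%N by apply: leq_ltn_trans fi si.
  have := @nth_find _ 0 (fun x : int => x == 0) d; rewrite has_find => /(_ hf) /eqP hf0.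
  have := @sorted_leq_nth _ _ dvdz_trans dvdzz 0 d dsort f i hf si fi.
  by rewrite -/f hf0 dvd0z => /eqP.
have eD1 : ZI D = diag_mx (\row_i (d`_i)%:~R) *m (pid_mx r : 'M[R]_(k, k0)).
  apply/matrixP => i j; rewrite mul_diag_mx !mxE.
  case: (eqVneq (i : nat) j) => [eij|nij] /=; last by rewrite mulr0n mulr0.
  rewrite mulr1n; case: (ltnP i r) => [//|ir]; first by rewrite mulr1.
  rewrite f2 ?mulr0 //.
  have := ltn_ord i; have := ltn_ord j; move: ir; rewrite /r -eij; lia.
have eD2 : (pid_mx r : 'M[R]_(k, k0)) =
    diag_mx (\row_i (if (i < r)%N then ((d`_i)%:~R)^-1 else 0)) *m ZI D.
  rewrite eD1 mulmxA mulmx_diag; apply/matrixP => i j; rewrite mul_diag_mx !mxE.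
  case: (ltnP i r) => ir; last by rewrite andbF mulr0.
  rewrite mulVf ?mul1r // intr_eq0; exact: f1.
have eD : (ZI D :=: (pid_mx r : 'M[R]_(r, k0)))%MS.
  apply/eqmxP/andP; split.
    rewrite eD1 (submx_trans (submxMl _ _)) //.
    rewrite -[X in (X <= _)%MS](@pid_mx_id R k r k0 r) //.
    exact: submxMl.
  rewrite -[X in (X <= _)%MS](@pid_mx_id R r k k0 r) //.
  by rewrite (submx_trans (submxMl _ _)) // eD2 submxMl.
have eM : (ZI M :=: (pid_mx r : 'M[R]_(r, k0)) *m ZI Rm)%MS.
  rewrite dM !map_mxM -mulmxA.
  apply: eqmx_trans; first by apply: eqmxMfull; rewrite row_full_unit ZI_unit.
  exact: eqmxMr.
pose Bs := (pid_mx r : 'M[R]_(r, k0)) *m ZI Rm *m B0.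
have eU : (U :=: Bs)%MS by apply: (eqmx_trans eUM); apply: eqmxMr.
have RmF := ZI_free Ru.
exists r, Bs; split.
- by rewrite /row_free /Bs !mxrankMfree // rank_pid_mx.
- by apply/eqmxP; apply: eqmx_sym.
apply/seteqP; split => v.
  move=> [[y ->] hv]; move: hv; rewrite /= eU /Bs submxMfree // => /submxP [w hw].
  pose y' := y *m invmx Rm.
  have ey : ZI y = ZI y' *m ZI Rm by rewrite -map_mxM mulmxKV.
  clearbody y'.
  have ey' : ZI y' = w *m pid_mx r.
    by apply: (row_free_inj RmF); rewrite /= -ey hw mulmxA.
  exists (y' *m pid_mx r).
  rewrite /Bs !mulmxA; congr (_ *m _); rewrite ey; congr (_ *m _).
  by rewrite map_mxM ey' map_pid_mx -!mulmxA !pid_mx_id.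
move=> [z ->]; split.
  by exists (z *m pid_mx r *m Rm); rewrite /Bs !map_mxM map_pid_mx !mulmxA.
by rewrite /= eU submxMl.
Qed.


Lemma clear_den a b (Cq : 'M[rat]_(a, b)) :
  exists M : 'M[int]_(a, b), (map_mx (@ratr R) Cq :=: ZI M)%MS.
Proof.
pose d := \prod_(ij : 'I_a * 'I_b) denq (Cq ij.1 ij.2).
exists (\matrix_(i, j) (numq (Cq i j) *
   \prod_(ij : 'I_a * 'I_b | ij != (i, j)) denq (Cq ij.1 ij.2))).
have dn0 : (d%:~R : R) != 0.
  by rewrite intr_eq0; apply/prodf_neq0 => ij _; exact: denq_neq0.
suff -> : ZI (\matrix_(i, j) (numq (Cq i j) *
   \prod_(ij : 'I_a * 'I_b | ij != (i, j)) denq (Cq ij.1 ij.2))) =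
   (d%:~R : R) *: map_mx (@ratr R) Cq.
  exact/eqmx_sym/eqmx_scale.
apply/matrixP => i j; rewrite !mxE /d [in RHS](bigD1 (i, j)) //= !rmorphM /ratr.
have : ((denq (Cq i j))%:~R : R) != 0 by rewrite intr_eq0 denq_neq0.
move: (numq _) (denq _) => nu de hde.
by field.
Qed.

Lemma QI_ZI a b (M : 'M[int]_(a, b)) :
  map_mx (@ratr R) (map_mx (fun x : int => x%:~R : rat) M) = ZI M.
Proof. by apply/matrixP => i j; rewrite !mxE ratr_int. Qed.

Lemma cap_RatSp U1 U2 : RatSp U1 -> RatSp U2 -> RatSp (U1 :&: U2)%MS.
Proof.
move=> [k1 [M1 /eqmxP e1]] [k2 [M2 /eqmxP e2]].
pose Cq := (map_mx (fun x : int => x%:~R : rat) M1 :&: map_mx (fun x : int => x%:~R : rat) M2)%MS.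
have [M eM] := clear_den Cq.
exists k0, M; apply/eqmxP.
apply: eqmx_trans; first exact: cap_eqmx e1 e2.
have eC : (ZI M1 :&: ZI M2 :=: ZI M)%MS.
  apply: eqmx_trans _ eM; apply: eqmx_sym.
  by rewrite -(QI_ZI M1) -(QI_ZI M2); apply: map_capmx.
apply: eqmx_trans (eqmxMr _ eC).
apply/eqmxP/andP; split; last exact: capmxMr.
set C := (_ :&: _)%MS.
have CB : (C <= B0)%MS by rewrite (eqmxP hfull) submx1.
rewrite -(mulmxKpV CB) submxMr // sub_capmx.
rewrite -(mulmxKp hfree (ZI M1)) -(mulmxKp hfree (ZI M2)) !submxMr //.
  exact: capmxSr.
exact: capmxSl.
Qed.


Lemma rat_cap U1 U2 : Defs.rational Lam0 U1 -> Defs.rational Lam0 U2 ->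
  Defs.rational Lam0 (U1 :&: U2)%MS.
Proof.
move=> /rat_RatSp h1 /rat_RatSp h2; have [k [M e]] := cap_RatSp h1 h2.
exact: RatSp_rat e.
Qed.

Lemma rat1 : Defs.rational Lam0 1%:M.
Proof.
apply: (@RatSp_rat k0 1%:M); rewrite map_mx1 mul1mx.
by apply/eqmxP/eqmx_sym/eqmxP.
Qed.

Variables (m : nat) (W : 'M[R]_(m, n)).

Lemma exists_min (P : 'M[R]_n -> Prop) :
  (forall U1 U2, P U1 -> P U2 -> P (U1 :&: U2)%MS) -> P 1%:M ->
  exists U, minimal_rational Lam0 P W U.
Proof.
move=> Pcap P1.
suff: forall N U, (\rank U <= N)%N -> Defs.rational Lam0 U -> P U -> (W <= U)%MS ->
    exists U, minimal_rational Lam0 P W U.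
  by move=> /(_ n 1%:M); apply => //; [rewrite rank_leq_col | exact: rat1 | exact: submx1].
elim=> [|N IH] U rkU rU PU WU.
  exists U; split => // U' _ _ _.
  by move: rkU; rewrite leqn0 mxrank_eq0 => /eqP ->; rewrite sub0mx.
have [h|h] := pselect (forall U', Defs.rational Lam0 U' -> P U' -> (W <= U')%MS -> (U <= U')%MS).
  by exists U; split.
move/existsNP: h => [U' /not_implyP [rU' /not_implyP [PU' /not_implyP [WU' nUU']]]].
apply: (IH (U :&: U')%MS).
- have : ((U :&: U')%MS < U)%MS.
    rewrite ltmxE capmxSl /=; apply/negP => hU; apply: nUU'.
    exact: submx_trans hU (capmxSr _ _).
  move/rank_ltmx => lt; rewrite -ltnS; exact: leq_trans lt rkU.
- exact: rat_cap.
- exact: Pcap.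
- by rewrite sub_capmx WU.
Qed.

End RatPart.

Lemma cap_stab (R : realType) n (A U1 U2 : 'M[R]_n) :
  (U1 *m A <= U1)%MS -> (U2 *m A <= U2)%MS -> ((U1 :&: U2)%MS *m A <= U1 :&: U2)%MS.
Proof. by move=> h1 h2; apply: submx_trans (capmxMr _ _ _) _; exact: capmxS. Qed.

Lemma inv_eqmx (R : realType) n (A X Y : 'M[R]_n) :
  (X :=: Y)%MS -> (X *m A <= X)%MS -> (Y *m A <= Y)%MS.
Proof. by move=> e; rewrite -(eqmxMr A e) -e. Qed.


Theorem lemma3p4 (R : realType) (n : nat) (rho : quat R -> 'M[R]_n)
    (Lam : set 'rV[R]_n) (m : nat) (W : 'M[R]_(m, n)) :
  is_quat_action rho -> full_lattice Lam ->
  countable [set L : quat R | qmul L L = qopp (qone R) /\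
     ~ (exists U : 'M[R]_n,
          minimal_rational Lam (inv_L rho L) W U /\
          minimal_rational Lam (inv_H rho) W U)].
Proof.
move=> hrho [k0 [B0 [hfree hfull ->]]].
pose ZU k (M : 'M[int]_(k, k0)) : 'M[R]_n := <<map_mx (fun x : int => x%:~R : R) M *m B0>>%MS.
pose S k M := [set L : quat R | qmul L L = qopp (qone R) /\
   inv_L rho L (ZU k M) /\ ~ inv_H rho (ZU k M)].
apply: (@sub_countable _ _ _ (\bigcup_(k in setT) \bigcup_(M in setT) S k M)).
  apply: subset_card_le => L [sqL nex].
  have [//|hno] := pselect ((\bigcup_(k in setT) \bigcup_(M in setT) S k M) L).
  exfalso; apply: nex.
  have good : forall k M, inv_L rho L (ZU k M) -> inv_H rho (ZU k M).
    move=> k M hi; apply: contrapT => hn; apply: hno.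
    by exists k => //; exists M.
  have capH : forall U1 U2, inv_H rho U1 -> inv_H rho U2 -> inv_H rho (U1 :&: U2)%MS.
    by move=> U1 U2 h1 h2 q; apply: cap_stab.
  have H1 : inv_H rho 1%:M by move=> q; exact: submx1.
  have [U0 [r0 h0 w0 min0]] := exists_min hfree hfull W capH H1.
  exists U0; split; last by split.
  split => //; first exact: h0.
  move=> U' rU' iU' wU'.
  have rV := rat_cap hfree hfull r0 rU'.
  have [k [M /eqmxP eM]] := rat_RatSp rV.
  have iV : inv_L rho L (U0 :&: U')%MS by apply: cap_stab => //; exact: h0.
  have eZ : ((U0 :&: U')%MS :=: ZU k M)%MS.
    by apply: (eqmx_trans eM); apply: eqmx_sym; apply: genmxE.
  have hH : inv_H rho (U0 :&: U')%MS.
    move=> q; apply: (inv_eqmx (eqmx_sym eZ)); apply: good.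
    exact: (inv_eqmx eZ).
  apply: submx_trans (min0 _ rV hH _) (capmxSr _ _).
  by rewrite sub_capmx w0.
apply: bigcup_countable; first exact: countableP.
move=> k _; apply: bigcup_countable; first exact: countableP.
move=> M _; apply: finite_set_countable.
have [[L1 hL1]|h] := pselect (exists L1, S k M L1); last first.
  by apply: (@sub_finite_set _ _ set0) => // L hL; apply: h; exists L.
apply: (sub_finite_set _ (finite_set2 L1 (qopp L1))) => L hL.
have [e|e] := pselect (L = L1); first by left.
have [e'|e'] := pselect (L = qopp L1); first by right.
exfalso; case: hL1 => sq1 [i1 ni1]; case: hL => sq [i ni].
by apply: ni1 => q; apply: (two_units_stab hrho sq1 sq e e' i1 i).
Qed.
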